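(* Let $X$ be a finite alphabet and let $w \in \overline{X}^*$ be a word representing the identity in the free group $F(X)$. Then the following are equivalent: (i) $w$ represents the identity in the polycyclic monoid $P(X)$; (ii) every prefix of $w$ represents a positive element or the identity of $F(X)$; (iii) the only minimum of $w$ is the identity of $F(X)$.
   Context: $\overline{X} = \{x, x^{-1} : x \in X\}$; letters of $X$ are positive generators and letters $x^{-1}$ negative generators. $F(X)$ is the free group with presentation $\langle \overline{X} \mid xx^{-1} = x^{-1}x = 1 \ (x \in X)\rangle$. The polycyclic monoid $P(X)$ is the monoid of partial functions on $X^*$ (composed left to right: $fg$ means apply $f$ then $g$) generated by $x: u \mapsto ux$ (defined everywhere) and $x^{-1}: ux \mapsto u$ (defined on $X^*x$), $x \in X$; a word over $\overline{X}$ represents the identity of $P(X)$ exactly when it can be reduced to the empty word by successively deleting factors $xx^{-1}$ with $x \in X$. An element of $F(X)$ is positive if it is a product of one or more positive generators. For $w \in \overline{X}^*$ and $g \in F(X)$, $g$ is a minimum of $w$ if (a) some prefix of $w$ represents $g$, and (b) no prefix of $w$ representing $g$ is immediately followed (in $w$) by a negative generator. *)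

(* Defs.v *)
From mathcomp Require Import all_boot.
From Stdlib Require Import Relations.
Set Implicit Arguments. Unset Strict Implicit. Unset Printing Implicit Defensive.

(* A letter of \overline{X}: (x, true) is the positive generator x,
   (x, false) is the negative generator x^{-1}. *)
Definition letter (X : finType) := (X * bool)%type.
Definition linv (X : finType) (a : letter X) : letter X := (a.1, ~~ a.2).

(* Free group F(X) = < \overline{X} | x x^-1 = x^-1 x = 1 >:
   the congruence on words generated by deleting a factor a a^{-1}. *)
Inductive fg_step (X : finType) : seq (letter X) -> seq (letter X) -> Prop :=
| fg_del (u v : seq (letter X)) (a : letter X) :
    fg_step (u ++ a :: linv a :: v) (u ++ v).

Definition fg_eq (X : finType) : relation (seq (letter X)) :=
  clos_refl_sym_trans _ (@fg_step X).

Definition fg_positive (X : finType) (g : seq (letter X)) : Prop :=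
  exists p : seq (letter X), 0 < size p /\ all (fun a => a.2) p /\ fg_eq p g.

(* Polycyclic monoid P(X): partial functions on X^*, composed left to right.
   x : u |-> u x ;  x^{-1} : u x |-> u (undefined otherwise). *)
Definition pc_letter (X : finType) (a : letter X) (ou : option (seq X))
  : option (seq X) :=
  match ou with
  | None => None
  | Some u =>
      if a.2 then Some (rcons u a.1)
      else match lastP u with
           | LastNil => None
           | LastRcons u' y => if y == a.1 then Some u' else None
           end
  end.

Definition pc_act (X : finType) (w : seq (letter X)) (ou : option (seq X)) :=
  foldl (fun o a => pc_letter a o) ou w.

Definition pc_identity (X : finType) (w : seq (letter X)) : Prop :=
  forall u : seq X, pc_act w (Some u) = Some u.

(* g (given by a representing word) is a minimum of w. Prefixes of w are
   take n w, n <= size w; the prefix take n w is immediately followed by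
   the letter ohead (drop n w). *)
Definition is_minimum (X : finType) (w g : seq (letter X)) : Prop :=
  (exists n, n <= size w /\ fg_eq (take n w) g) /\
  (forall n, n <= size w -> fg_eq (take n w) g ->
     forall a, ohead (drop n w) = Some a -> a.2 = true).

(* Main.v *)
Require Import Defs.
From mathcomp Require Import all_boot.
From Stdlib Require Import Relations.
From mathcomp Require Import zify.
Set Implicit Arguments. Unset Strict Implicit. Unset Printing Implicit Defensive.

Definition step (X : finType) (s : seq (letter X)) (a : letter X) :=
  if s is b :: s' then (if b == linv a then s' else a :: s) else [:: a].
Definition red (X : finType) (w : seq (letter X)) := foldl (@step X) [::] w.
Definition irred (X : finType) (s : seq (letter X)) :=
  sorted (fun b c => b != linv c) s.

Lemma linvK (X : finType) (a : letter X) : linv (linv a) = a.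
Proof. by case: a => x p; rewrite /linv /= negbK. Qed.

Lemma eq_linv (X : finType) (a b : letter X) : (a == linv b) = (b == linv a).
Proof. by apply/eqP/eqP => ->; rewrite linvK. Qed.

Lemma step_irred (X : finType) (s : seq (letter X)) (a : letter X) :
  irred s -> irred (step s a).
Proof.
case: s => [|b s] //=; case: ifP => E; first by move/path_sorted.
by rewrite /irred /= eq_linv E.
Qed.

Lemma step_cancel (X : finType) (s : seq (letter X)) (a : letter X) :
  irred s -> step (step s a) (linv a) = s.
Proof.
case: s => [|b s] /=; first by rewrite linvK eqxx.
case: ifP => [/eqP Eb|E]; last by rewrite /= linvK eqxx.
case: s => [|c s] /=; first by rewrite Eb.
rewrite linvK => /andP [H _]; case: ifP => [/eqP Ec|_]; last by rewrite Eb.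
by move: H; rewrite Eb Ec eqxx.
Qed.

Lemma foldl_irred (X : finType) (w : seq (letter X)) s :
  irred s -> irred (foldl (@step X) s w).
Proof. by elim: w s => [|a w IH] s //= H; apply: IH; apply: step_irred. Qed.

Lemma red_step (X : finType) (u v : seq (letter X)) :
  fg_step u v -> red u = red v.
Proof.
case=> u0 v0 a; rewrite /red !foldl_cat /=.
by rewrite step_cancel //; apply: foldl_irred.
Qed.

Lemma red_eq (X : finType) (u v : seq (letter X)) : fg_eq u v -> red u = red v.
Proof.
elim=> [x y /red_step|x|x y _ ->|x y z _ -> _ ->] //.
Qed.

Lemma fg_red (X : finType) (w s : seq (letter X)) :
  fg_eq (rev s ++ w) (rev (foldl (@step X) s w)).
Proof.
elim: w s => [|a w IH] s /=; first by rewrite cats0; apply: rst_refl.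
apply: rst_trans (IH _).
case: s => [|b s] /=; first by apply: rst_refl.
case: ifP => [/eqP Eb|_].
  subst b; have := fg_del (rev s) w (linv a); rewrite linvK => H.
  by apply: rst_step; rewrite rev_cons cat_rcons.
by rewrite [rev (a :: _)]rev_cons cat_rcons; apply: rst_refl.
Qed.

Lemma fg_red0 (X : finType) (w : seq (letter X)) : fg_eq w (rev (red w)).
Proof. exact: (fg_red w [::]). Qed.

Lemma red_nil (X : finType) : red ([::] : seq (letter X)) = [::].
Proof. by []. Qed.

Lemma red_rcons (X : finType) (p : seq (letter X)) (a : letter X) :
  red (rcons p a) = step (red p) a.
Proof. by rewrite /red foldl_rcons. Qed.

Lemma step_pos (X : finType) (s : seq (letter X)) (a : letter X) :
  a.2 -> all (fun b => b.2) s -> step s a = a :: s.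
Proof.
case: s => [|b s] //= Ha /andP [Hb _]; case: ifP => // /eqP Eb.
by move: Hb; rewrite Eb /linv /= Ha.
Qed.

Lemma red_pos (X : finType) (p s : seq (letter X)) :
  all (fun b => b.2) s -> all (fun b => b.2) p ->
  foldl (@step X) s p = rev p ++ s.
Proof.
elim: p s => [|a p IH] s //= Hs /andP [Ha Hp].
rewrite step_pos // IH //=; last by rewrite Ha.
by rewrite rev_cons cat_rcons.
Qed.

Lemma pc_act_rcons (X : finType) (p : seq (letter X)) (a : letter X) o :
  pc_act (rcons p a) o = pc_letter a (pc_act p o).
Proof. by rewrite /pc_act foldl_rcons. Qed.

Lemma pc_cat (X : finType) (p q : seq (letter X)) o :
  pc_act (p ++ q) o = pc_act q (pc_act p o).
Proof. by rewrite /pc_act foldl_cat. Qed.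

Lemma pc_None (X : finType) (p : seq (letter X)) : pc_act p None = None.
Proof. by elim: p. Qed.

Lemma pcN (X : finType) (u : seq X) y x :
  pc_letter (x, false) (Some (rcons u y)) = if y == x then Some u else None.
Proof.
rewrite /pc_letter /=.
have : forall s, s = rcons u y -> (match lastP s with
  | LastNil => None
  | LastRcons u' y0 => if y0 == x then Some u' else None
  end) = (if y == x then Some u else None).
  move=> s; case: lastP => [|u' y'] E.
    by move/(congr1 size): E; rewrite size_rcons.
  by move/rcons_inj: E => [-> ->].
by apply.
Qed.

Lemma pcN0 (X : finType) (x : X) :
  pc_letter (x, false) (Some [::]) = None.
Proof.
rewrite /pc_letter /=.
have : forall s : seq X, s = [::] -> (match lastP s with
  | LastNil => None
  | LastRcons u' y0 => if y0 == x then Some u' else None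
  end) = None.
  move=> s; case: lastP => [|u' y'] E //.
  by move/(congr1 size): E; rewrite size_rcons.
by apply.
Qed.

Lemma take_succ (T : Type) (w : seq T) t a r :
  drop t w = a :: r -> take t.+1 w = rcons (take t w) a.
Proof.
elim: w t => [|b w IH] [|t] //=; first by move=> [-> _]; rewrite take0.
by move/IH ->.
Qed.

Lemma drop_lt (T : Type) (w : seq T) t a r : drop t w = a :: r -> t < size w.
Proof. by move=> H; rewrite -subn_gt0 -size_drop H. Qed.

Lemma drop_size_lt (T : Type) (w : seq T) t :
  t < size w -> exists a r, drop t w = a :: r.
Proof.
case E: (drop t w) => [|a r]; last by eauto.
by move/(congr1 size): E; rewrite size_drop /= => /eqP; rewrite subn_eq0 leqNgt => /negbTE ->.
Qed.

Lemma all_pos_map (X : finType) (v : seq X) :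
  all (fun a : letter X => a.2) (rev (map (fun x => (x, true)) v)).
Proof. by rewrite all_rev; elim: v. Qed.

Lemma pc_red (X : finType) (p : seq (letter X)) v :
  pc_act p (Some [::]) = Some v -> red p = rev (map (fun x => (x, true)) v).
Proof.
elim/last_ind: p v => [|p a IH] v; first by case=> <-.
rewrite pc_act_rcons red_rcons.
case E: (pc_act p (Some [::])) => [v'|]; last by [].
rewrite (IH _ E); case: a => x [].
  move=> /= [<-]; rewrite step_pos ?all_pos_map //.
  by rewrite map_rcons rev_rcons.
case: (lastP v') E => [|v'' y] E; first by rewrite pcN0.
rewrite pcN; case: eqP => // -> [<-].
by rewrite map_rcons rev_rcons /step /linv /= eqxx.
Qed.

Lemma pos_of_ii (X : finType) (p : seq (letter X)) :
  fg_positive p \/ fg_eq p [::] -> all (fun a => a.2) (red p).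
Proof.
case=> [[q [Hq [Hqp Heq]]]|H]; last by rewrite (red_eq H).
by rewrite -(red_eq Heq) /red red_pos //= cats0 all_rev.
Qed.

Lemma ii_of_pos (X : finType) (p : seq (letter X)) :
  all (fun a => a.2) (red p) -> fg_positive p \/ fg_eq p [::].
Proof.
move=> H; have E := fg_red0 p.
case Er: (red p) => [|b s]; first by right; rewrite Er in E.
left; exists (rev (red p)); split; first by rewrite size_rev Er.
split; [by rewrite all_rev | exact: rst_sym].
Qed.

Lemma pos_pc (X : finType) (w : seq (letter X)) : fg_eq w [::] ->
  (forall t, t <= size w -> all (fun a => a.2) (red (take t w))) ->
  pc_identity w.
Proof.
move=> Hw Hpos u.
have key: forall t, t <= size w ->
    pc_act (take t w) (Some u) = Some (u ++ map fst (rev (red (take t w)))).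
  elim=> [|t IH] Ht; first by rewrite take0 /= cats0.
  have [a [r Ed]] := drop_size_lt Ht.
  have Et := take_succ Ed.
  have Hp1 := Hpos _ Ht; have Hp0 := Hpos _ (ltnW Ht).
  rewrite Et pc_act_rcons red_rcons IH ?(ltnW Ht) //.
  rewrite Et red_rcons in Hp1.
  move: Hp0 Hp1; set s := red (take t w); case: a {Ed Et} => x [] Hp0 Hp1.
    by rewrite step_pos //= rev_cons map_rcons rcons_cat.
  case: s Hp0 Hp1 => [|b s] Hp0 //.
  rewrite rev_cons map_rcons -rcons_cat pcN.
  rewrite /step; case: ifP => [/eqP Eb|_] //= _.
  by rewrite Eb /= eqxx.
have := key _ (leqnn _); rewrite take_size (red_eq Hw) red_nil /= cats0.
by [].
Qed.

Lemma pc_pos (X : finType) (w : seq (letter X)) : pc_identity w ->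
  (forall t, t <= size w -> all (fun a => a.2) (red (take t w))).
Proof.
move=> Hi t Ht.
case E: (pc_act (take t w) (Some [::])) => [v|]; first by rewrite (pc_red E) all_pos_map.
by have := Hi [::]; rewrite -(cat_take_drop t w) pc_cat E pc_None.
Qed.

Lemma fg_sym (X : finType) (u v : seq (letter X)) : fg_eq u v -> fg_eq v u.
Proof. exact: rst_sym. Qed.
Lemma fg_trans (X : finType) (u v z : seq (letter X)) :
  fg_eq u v -> fg_eq v z -> fg_eq u z.
Proof. exact: rst_trans. Qed.

Lemma pos_min (X : finType) (w : seq (letter X)) : fg_eq w [::] ->
  (forall t, t <= size w -> all (fun a => a.2) (red (take t w))) ->
  is_minimum w [::] /\ (forall g, is_minimum w g -> fg_eq g [::]).
Proof.
move=> Hw Hpos; split.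
  split; first by exists 0; split; [done | rewrite take0; apply: rst_refl].
  move=> n Hn Heq a; case Edr: (drop n w) => [|a' r] //= [<-].
  case: a' Edr => x [] // Edr.
  have := Hpos n.+1 (drop_lt Edr).
  by rewrite (take_succ Edr) red_rcons (red_eq Heq).
move=> g [[n [Hn Hg]] Hmin].
have Hn' := fg_red0 (take n w).
case EG: (red (take n w)) => [|b G'].
  apply: fg_trans (fg_sym Hg) _; by rewrite EG in Hn'.
exfalso; set G := b :: G'.
have claim: forall d, n + d <= size w ->
    (exists j a r, [/\ drop j w = a :: r, a.2 = false & red (take j w) = G])
    \/ exists s1, red (take (n + d) w) = s1 ++ G.
  elim=> [|d IH] Hd; first by right; exists [::]; rewrite addn0.
  have Hlt : n + d < size w by rewrite addnS in Hd.
  have [a [r Ed]] := drop_size_lt Hlt.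
  case: (IH (ltnW Hlt)) => [L|[s1 E1]]; first by left.
  rewrite addnS (take_succ Ed) red_rcons E1.
  case: a Ed => x [] Ed.
    right; exists ((x, true) :: s1); rewrite step_pos //.
    by have := Hpos (n + d) (ltnW Hlt); rewrite E1.
  case: s1 E1 => [|c s1] E1.
    by left; exists (n + d), (x, false), r.
  right; rewrite /= /step; case: ifP => _; first by exists s1.
  by exists [:: (x, false), c & s1].
have := claim (size w - n); rewrite subnKC // take_size (red_eq Hw) red_nil => /(_ (leqnn _)).
case=> [[j [a [r [Ed Ea Ej]]]]|[s1]]; last by case: s1.
have Hj := drop_lt Ed.
have Heq : fg_eq (take j w) g.
  apply: fg_trans (fg_red0 _) _; rewrite Ej /G -EG.
  exact: fg_trans (fg_sym Hn') Hg.
have := Hmin j (ltnW Hj) Heq a; rewrite Ed Ea => H.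
by have := H erefl.
Qed.

Lemma split_has (T : Type) (p : pred T) (s : seq T) :
  has p s -> exists s1 b s2, s = s1 ++ b :: s2 /\ p b.
Proof.
elim: s => [|c s IH] //= /orP [Hc|/IH [s1 [b [s2 [E Hb]]]]].
  by exists [::], c, s.
by exists (c :: s1), b, s2; rewrite E.
Qed.

Lemma size_red (X : finType) (p s : seq (letter X)) :
  size (foldl (@step X) s p) <= size s + size p.
Proof.
elim: p s => [|a p IH] s /=; first by rewrite addn0.
apply: leq_trans (IH _) _; rewrite addnS -addSn leq_add2r.
by case: s => [|b s] //=; case: ifP => // _; apply: leqW.
Qed.

Lemma min_pos (X : finType) (w : seq (letter X)) :
  (forall g, is_minimum w g -> fg_eq g [::]) ->
  (forall t, t <= size w -> all (fun a => a.2) (red (take t w))).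
Proof.
move=> H3 t0 Ht0.
case Ea: (all (fun a : letter X => a.2) (red (take t0 w))) => //; exfalso.
have : has (predC (fun a : letter X => a.2)) (red (take t0 w)) by rewrite has_predC Ea.
case/split_has => s0 [b [G' [E0 Hb]]].
set G := b :: G'.
pose P (s : seq (letter X)) :=
  count (fun a : letter X => a.2) s + (size w - count (fun a : letter X => ~~ a.2) s).
have bound : forall t, t <= size w ->
    count (fun a : letter X => ~~ a.2) (red (take t w)) <= size w.
  move=> t Ht; apply: leq_trans (count_size _ _) _.
  apply: leq_trans (size_red _ _) _; rewrite add0n size_take_min.
  exact: geq_minr.
suff: forall m t, t <= size w -> (exists s1, red (take t w) = s1 ++ G) ->
     P (red (take t w)) = m -> False.
  by move/(_ _ t0 Ht0 (ex_intro _ s0 E0) erefl).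
elim/ltn_ind => m IH t Ht [s1 E1] HP.
have Hred := fg_red0 (take t w).
have Hmin : is_minimum w (rev (red (take t w))).
  split; first by exists t.
  move=> t' Ht' Heq a; case Edr: (drop t' w) => [|a' r] //= [<-].
  case: a' Edr => x [] // Edr; exfalso.
  have Et' : red (take t' w) = s1 ++ G.
    by rewrite (red_eq Heq) -(red_eq Hred).
  have Hlt := drop_lt Edr.
  have Hb' := bound _ Hlt.
  rewrite (take_succ Edr) red_rcons Et' in Hb'.
  apply: (IH (P (step (s1 ++ G) (x, false)))) (t'.+1) Hlt _ _.
  - rewrite -HP E1; move: Hb'.
    case: s1 {E1 Et'} => [|c s1] /=.
      rewrite /step; case: ifP => [/eqP Eb|_].
        by move: Hb; rewrite Eb.
      rewrite /P /= => Hb'; lia.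
    rewrite /step; case: ifP => [/eqP Eb|_].
      rewrite /P Eb /= => _; lia.
    rewrite /P /= => Hb'; lia.
  - rewrite (take_succ Edr) red_rcons Et'.
    case: s1 {E1 Et' Hb'} => [|c s1] /=.
      rewrite /step; case: ifP => [/eqP Eb|_].
        by move: Hb; rewrite Eb.
      by exists [:: (x, false)].
    rewrite /step; case: ifP => _; first by exists s1.
    by exists [:: (x, false), c & s1].
  - by rewrite (take_succ Edr) red_rcons Et'.
have := red_eq (H3 _ Hmin); rewrite -(red_eq Hred) red_nil E1.
by case: s1 {E1}.
Qed.

Theorem proposition4p8 (X : finType) (w : seq (letter X)) :
  fg_eq w [::] ->
  (pc_identity w <->
   (forall n, n <= size w -> fg_positive (take n w) \/ fg_eq (take n w) [::]))
  /\
  ((forall n, n <= size w -> fg_positive (take n w) \/ fg_eq (take n w) [::]) <->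
   (is_minimum w [::] /\ (forall g, is_minimum w g -> fg_eq g [::]))).
Proof.
move=> Hw.
have E : (forall n, n <= size w -> fg_positive (take n w) \/ fg_eq (take n w) [::])
   <-> (forall t, t <= size w -> all (fun a => a.2) (red (take t w))).
  split=> H t Ht; [exact: pos_of_ii (H t Ht) | exact: ii_of_pos (H t Ht)].
rewrite E; split; split.
- exact: pc_pos.
- exact: pos_pc.
- exact: pos_min.
- by case=> _; apply: min_pos.
Qed.
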